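(* Let $G$ be a graph with $n$ nodes and $\pi\in S_n$. Then $\pi$ is representable by $G$ if and only if there is no $\mathbf y\in\mathbb{R}^{n-1}$ with $(\Xi R_\pi C_G)^T\mathbf y=\mathbf 0$, $\mathbf y\ge\mathbf 0$ and $\mathbf y\ne\mathbf 0$.
   Context: Graphs are finite directed graphs with nodes $\{0,\dots,n-1\}$; $d_G(x,y)$ is the shortest directed path length from $x$ to $y$ ($\infty$ if none). The distance-count matrix $C_G\in\mathbb{R}^{n\times n}$ has $(C_G)_{i,k}=|\{j: d_G(j,i)=k\}|$ (indices from 0). For $\mathbf a\in\mathbb{R}^{\mathbb{N}}$ the linear centrality is $f^{\mathbf a}_G(i)=\sum_{k=0}^{n-1}(C_G)_{i,k}a_k$. $\pi$ is representable by $G$ if there is $\mathbf a$ with $f^{\mathbf a}_G(\pi(0))>f^{\mathbf a}_G(\pi(1))>\dots>f^{\mathbf a}_G(\pi(n-1))$. $R_\pi$ is the $n\times n$ 0/1 matrix with $(R_\pi)_{ij}=1$ iff $\pi(i)=j$. $\Xi\in\mathbb{R}^{(n-1)\times n}$ is the matrix with $\Xi_{i,i}=-1$, $\Xi_{i,i+1}=1$ for $0\le i\le n-2$, and all other entries $0$. Inequalities between vectors are entrywise. *)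

(* Defs.v *)
From HB Require Import structures.
From mathcomp Require Import all_boot all_order all_algebra all_fingroup.
From mathcomp Require Import reals.
Set Implicit Arguments. Unset Strict Implicit. Unset Printing Implicit Defensive.
Import Order.TTheory GRing.Theory Num.Theory.
Local Open Scope ring_scope.

Definition has_walk (n : nat) (e : rel 'I_n) (x y : 'I_n) (k : nat) : bool :=
  [exists t : k.-tuple 'I_n, path e x t && (last x t == y)].

(* d_G(x,y) = k : the shortest directed path from x to y has length k
   (d_G(x,y) = infinity means dist_eq holds for no k) *)
Definition dist_eq (n : nat) (e : rel 'I_n) (x y : 'I_n) (k : nat) : bool :=
  has_walk e x y k && [forall m : 'I_k, ~~ has_walk e x y m].

Definition Cmat (R : nzRingType) (n : nat) (e : rel 'I_n) : 'M[R]_n :=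
  \matrix_(i < n, k < n) (#|[set j : 'I_n | dist_eq e j i k]|)%:R.

Definition lin_centrality (R : nzRingType) (n : nat) (e : rel 'I_n)
  (a : nat -> R) (i : 'I_n) : R :=
  \sum_(k < n) Cmat R e i k * a k.

Definition representable (R : realType) (n : nat) (e : rel 'I_n)
  (pi : 'S_n) : Prop :=
  exists a : nat -> R, forall i j : 'I_n, val j = (val i).+1 ->
    lin_centrality e a (pi j) < lin_centrality e a (pi i).

Definition Rperm (R : nzRingType) (n : nat) (pi : 'S_n) : 'M[R]_n :=
  \matrix_(i < n, j < n) (pi i == j)%:R.

Definition Xi (R : nzRingType) (n : nat) : 'M[R]_(n.-1, n) :=
  \matrix_(i < n.-1, j < n)
    (if val j == val i then -1 else if val j == (val i).+1 then 1 else 0).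

(* Main.v *)
Require Import Defs.
From mathcomp Require Import reals.
From HB Require Import structures.
From mathcomp Require Import all_boot all_order all_algebra all_fingroup.
From mathcomp Require Import ring lra.
Import Order.TTheory GRing.Theory Num.Theory.
Local Open Scope ring_scope.


Lemma exists_t (R : realFieldType) (I : finType) (D : pred I) (c s : I -> R) :
  (forall i, D i -> c i = 0 -> 0 < s i) ->
  (forall p q, D p -> D q -> 0 < c p -> c q < 0 -> 0 < (- c q) * s p + c p * s q) ->
  exists t, forall i, D i -> 0 < c i * t + s i.
Proof.
move=> H0 H1.
pose f i := - s i / c i.
have fpq : forall p q, D p -> D q -> 0 < c p -> c q < 0 -> f p < f q.
  move=> p q Dp Dq cp cq; rewrite -subr_gt0.
  have -> : f q - f p = ((- c q) * s p + c p * s q) / (c p * - c q).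
    by rewrite /f; field; rewrite (lt_eqF cq) (gt_eqF cp).
  by apply: divr_gt0; [apply: H1 | apply: mulr_gt0; rewrite // oppr_gt0].
pose Mx := 1 + \big[Order.max/0]_(p | D p && (0 < c p)) f p.
pose u := \big[Order.min/Mx]_(q | D q && (c q < 0)) f q.
pose l := \big[Order.max/(u - 1)]_(p | D p && (0 < c p)) f p.
have lu : l < u.
  apply: bigmax_lt; first lra.
  move=> p /andP[Dp cp]; apply: lt_bigmin.
    have := le_bigmax_cond 0 f (_ : (fun p => D p && (0 < c p)) p); rewrite /Mx.
    by move=> /(_ (introT andP (conj Dp cp))); lra.
  by move=> q /andP[Dq cq]; apply: fpq.
exists ((l + u) / 2) => i Di.
case: (ltrgt0P (c i)) => ci.
- have : f i <= l by apply: le_bigmax_cond; rewrite Di ci.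
  move=> fl; have ht : f i < (l + u) / 2 by lra.
  have : c i * f i < c i * ((l + u) / 2) by rewrite ltr_pM2l.
   have -> : c i * f i = - s i by rewrite /f; field; rewrite (gt_eqF ci).
  lra.
- have : u <= f i by apply: bigmin_le_cond; rewrite Di ci.
  move=> fu; have ht : (l + u) / 2 < f i by lra.
  have : c i * f i < c i * ((l + u) / 2) by rewrite ltr_nM2l.
   have -> : c i * f i = - s i by rewrite /f; field; rewrite (lt_eqF ci).
  lra.
- by rewrite ci mul0r add0r; apply: H0.
Qed.

Lemma gordan (R : realFieldType) (k : nat) : forall (I : finType) (D : pred I) (A : I -> 'I_k -> R),
  (exists x : 'I_k -> R, forall i, D i -> 0 < \sum_j A i j * x j) \/
  (exists y : I -> R, (forall i, 0 <= y i) /\ (forall i, ~~ D i -> y i = 0) /\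
     (exists i, 0 < y i) /\ forall j, \sum_i y i * A i j = 0).
Proof.
elim: k => [|k IH] I D A.
  case: (pickP D) => [i0 Di0 | noD].
    right; exists (fun i => (i == i0)%:R); split; first by move=> i; apply: ler0n.
    split; first by move=> i; case: eqP => [-> | _]; rewrite ?Di0.
    by split; [exists i0; rewrite eqxx ltr01 | case].
  by left; exists (fun _ => 0) => i; rewrite noD.
pose c i := A i ord0.
pose b i j := A i (lift ord0 j).
pose D' : pred (I + I * I)%type := fun z => match z with
  | inl i => D i && (c i == 0)
  | inr pq => [&& D pq.1, D pq.2, 0 < c pq.1 & c pq.2 < 0] end.
pose A' (z : (I + I * I)%type) j := match z with
  | inl i => b i j
  | inr pq => (- c pq.2) * b pq.1 j + c pq.1 * b pq.2 j end.
case: (IH _ D' A') => [[x' Hx'] | [y [y0 [yD [[z yz] yeq]]]]].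
  pose s i := \sum_j b i j * x' j.
  have H0 : forall i, D i -> c i = 0 -> 0 < s i.
    by move=> i Di ci; have := Hx' (inl i); rewrite /= Di ci eqxx; apply.
  have H1 : forall p q, D p -> D q -> 0 < c p -> c q < 0 -> 0 < (- c q) * s p + c p * s q.
    move=> p q Dp Dq cp cq; have := Hx' (inr (p, q)); rewrite /= Dp Dq cp cq => /(_ isT).
    rewrite /s !mulr_sumr -big_split /=.
    by move=> H; apply: (lt_le_trans H); rewrite le_eqVlt; apply/orP; left; apply/eqP; apply: eq_bigr => j _; ring.
  have [t Ht] := @exists_t _ _ D c s H0 H1.
  left; exists (fun j => if unlift ord0 j is Some j' then x' j' else t) => i Di.
  rewrite big_ord_recl /= unlift_none.
  under eq_bigr do rewrite liftK.
  exact: Ht.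
pose Y i := y (inl i) + \sum_q y (inr (i, q)) * (- c q) + \sum_q y (inr (q, i)) * c q.
have T1 : forall i q, 0 <= y (inr (i, q)) * (- c q).
  move=> i q; case: (boolP (D' (inr (i, q)))) => [/and4P[_ _ _ cq] | nD].
    by apply: mulr_ge0 => //; rewrite oppr_ge0 ltW.
  by rewrite yD // mul0r.
have T2 : forall i q, 0 <= y (inr (q, i)) * c q.
  move=> i q; case: (boolP (D' (inr (q, i)))) => [/and4P[_ _ cq _] | nD].
    by apply: mulr_ge0 => //; rewrite ltW.
  by rewrite yD // mul0r.
have S1 : forall i, 0 <= \sum_q y (inr (i, q)) * (- c q) by move=> i; apply: sumr_ge0.
have S2 : forall i, 0 <= \sum_q y (inr (q, i)) * c q by move=> i; apply: sumr_ge0.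
right; exists Y; split.
  move=> i; rewrite /Y; have := y0 (inl i); have := S1 i; have := S2 i; lra.
split.
  move=> i Di; rewrite /Y yD /=; last by rewrite (negbTE Di).
  rewrite !big1 ?addr0 // => q _; rewrite yD ?mul0r //= (negbTE Di) //.
  by rewrite andbF.
split.
  case: z yz => [i | [p q]] yz.
    exists i; rewrite /Y; have := S1 i; have := S2 i; lra.
  case: (boolP (D' (inr (p, q)))) => [/and4P[Dp Dq cp cq] | nD]; last by rewrite yD // ltxx in yz.
  exists p; rewrite /Y (bigD1 q) //=.
  have : 0 < y (inr (p, q)) * - c q by apply: mulr_gt0; rewrite // oppr_gt0.
  have : 0 <= \sum_(q0 | q0 != q) y (inr (p, q0)) * - c q0 by apply: sumr_ge0.
  have := y0 (inl p); have := S2 p; lra.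
move=> j; case: (unliftP ord0 j) => [j'|] ->.
  have := yeq j'; rewrite big_sumType /=.
  move=> H; apply: (etrans _ H); rewrite /Y.
  under eq_bigr do rewrite !mulrDl.
  rewrite !big_split /= -addrA; congr (_ + _).
  under [RHS]eq_bigr do rewrite mulrDr.
  rewrite big_split /=.
  have E1 : \sum_(z : I * I) y (inr z) * (- c z.2 * b z.1 j') = \sum_p \sum_q y (inr (p, q)) * (- c q * b p j').
    by rewrite pair_bigA; apply: eq_bigr => -[p q].
  have E2 : \sum_(z : I * I) y (inr z) * (c z.1 * b z.2 j') = \sum_p \sum_q y (inr (p, q)) * (c p * b q j').
    by rewrite pair_bigA; apply: eq_bigr => -[p q].
  rewrite E1 E2.
  congr (_ + _).
    by apply: eq_bigr => i _; rewrite mulr_suml; apply: eq_bigr => q _; rewrite /b; ring.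
  rewrite [RHS]exchange_big /=.
  by apply: eq_bigr => i _; rewrite mulr_suml; apply: eq_bigr => q _; rewrite /b; ring.
rewrite /Y; under eq_bigr do rewrite !mulrDl.
rewrite !big_split /=.
rewrite big1 ?add0r; last first.
  move=> i _; case: (boolP (D' (inl i))) => [/andP[_ /eqP ci]|nD].
    by have -> : A i ord0 = 0 := ci; rewrite mulr0.
  by rewrite yD // mul0r.
under eq_bigr do rewrite mulr_suml.
under [X in _ + X]eq_bigr do rewrite mulr_suml.
rewrite [X in _ + X = _]exchange_big /= -big_split /=; apply: big1 => i _.
rewrite -big_split; apply: big1 => q _ /=; rewrite /c; ring.
Qed.

Lemma gordan_mx (R : realFieldType) p q (M : 'M[R]_(p, q)) :
  (exists x : 'I_q -> R, forall i, 0 < \sum_k M i k * x k) <->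
  ~ (exists y : 'cV[R]_p, M^T *m y = 0 /\ (forall i, 0 <= y i 0) /\ y != 0).
Proof.
split.
  move=> [x Hx] [y [Hy [y0 ny]]].
  have [i yi] : exists i, y i 0 != 0.
    apply/existsP; apply: contraR ny => /existsPn H; apply/eqP/matrixP => i j.
    by rewrite ord1 mxE; apply/eqP/negPn/H.
  have yi' : 0 < y i 0 by rewrite lt_def yi y0.
  have E : \sum_i y i 0 * (\sum_k M i k * x k) = \sum_k (M^T *m y) k 0 * x k.
    under eq_bigr do rewrite mulr_sumr.
    rewrite exchange_big; apply: eq_bigr => k _; rewrite mxE mulr_suml.
    by apply: eq_bigr => i' _; rewrite /trmx mxE mulrA [y i' 0 * _]mulrC.
  move: E; rewrite Hy [X in _ = X]big1; last by move=> k _; rewrite mxE mul0r.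
  rewrite (bigD1 i) //=.
  have : 0 <= \sum_(i0 | i0 != i) y i0 0 * (\sum_k M i0 k * x k).
    by apply: sumr_ge0 => i0 _; apply: mulr_ge0 => //; apply: ltW.
  have := mulr_gt0 yi' (Hx i); lra.
move=> H.
case: (@gordan R q 'I_p predT (fun i k => M i k)) => [[x Hx]|[y [y0 [_ [[i yi] yeq]]]]].
  by exists x => i; apply: Hx.
exfalso; apply: H; exists (\col_i y i); split.
  apply/matrixP => k j; rewrite !mxE; apply: etrans (yeq k); apply: eq_bigr => i' _.
  by rewrite !mxE mulrC.
split; first by move=> i'; rewrite mxE.
by apply/negP => /eqP/matrixP/(_ i 0); rewrite !mxE => yi0; rewrite yi0 ltxx in yi.
Qed.

Lemma Mentry (R : realType) m (e : rel 'I_m.+1) (pi : 'S_m.+1) (i : 'I_m) k :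
  (Xi R m.+1 *m Rperm R pi *m Cmat R e) i k =
  Cmat R e (pi (lift ord0 i)) k - Cmat R e (pi (widen_ord (leqnSn m) i)) k.
Proof.
have RC : forall l, (Rperm R pi *m Cmat R e) l k = Cmat R e (pi l) k.
  move=> l; rewrite mxE (bigD1 (pi l)) //= mxE eqxx mul1r big1 ?addr0 //.
  by move=> j /negbTE; rewrite mxE eq_sym => ->; rewrite mul0r.
rewrite -mulmxA mxE.
set i0 := widen_ord (leqnSn m) i.
set i1 := lift ord0 i.
have ne : i1 != i0 by rewrite -val_eqE /= /bump leq0n add1n neq_ltn ltnSn orbT.
rewrite (bigD1 i0) //= (bigD1 i1) //= big1 ?addr0.
  rewrite !RC !mxE /= eqxx /bump leq0n add1n eqxx.
  have -> : (i.+1 == i) = false by apply/negbTE; rewrite neq_ltn ltnSn orbT.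
  by rewrite mulN1r mul1r addrC.
move=> l /andP[nl1 nl0]; rewrite mxE.
have -> : (val l == val i) = false by apply/negbTE; move: nl0; rewrite -val_eqE.
have -> : (val l == i.+1) = false.
  by apply/negbTE; move: nl1; rewrite -val_eqE /= ?/bump ?leq0n ?add1n.
by rewrite mul0r.
Qed.

Theorem theorem6 (R : realType) (n : nat) (e : rel 'I_n) (pi : 'S_n) :
  representable R e pi <->
  ~ (exists y : 'cV[R]_(n.-1),
       (Xi R n *m Rperm R pi *m Cmat R e)^T *m y = 0
       /\ (forall i, 0 <= y i 0) /\ y != 0).
Proof.
case: n e pi => [|m] e pi.
  split; last by move=> _; exists (fun _ => 0) => i; case: i.
  move=> _ [y [_ [_ ny]]]; apply/negP: ny; rewrite negbK; apply/eqP/matrixP => i.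
  by case: i.
rewrite -gordan_mx.
have key : forall (a : nat -> R) (i : 'I_m),
  \sum_k (Xi R m.+1 *m Rperm R pi *m Cmat R e) i k * - a k =
  lin_centrality e a (pi (widen_ord (leqnSn m) i)) - lin_centrality e a (pi (lift ord0 i)).
  move=> a i; rewrite /lin_centrality -sumrB; apply: eq_bigr => k _.
  by rewrite Mentry; ring.
split.
  move=> [a Ha]; exists (fun k => - a k) => i; rewrite key subr_gt0.
  by apply: Ha; rewrite /= /bump leq0n add1n.
move=> [x Hx]; exists (fun k => - x (inord k)) => i j hij.
have im : (i < m)%N by rewrite -ltnS -hij ltn_ord.
have := Hx (Ordinal im).
rewrite (eq_bigr (fun k => (Xi R m.+1 *m Rperm R pi *m Cmat R e) (Ordinal im) k * - (- x (inord k)))); last first.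
  by move=> k _; rewrite opprK inord_val.
rewrite (key (fun k : nat => - x (inord k))) subr_gt0.
have -> : widen_ord (leqnSn m) (Ordinal im) = i by apply: val_inj.
have -> : lift ord0 (Ordinal im) = j by apply: val_inj; rewrite /= /bump leq0n add1n hij.
by [].
Qed.
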